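(* Let $p$ be an odd prime and $\mathbf{s}=(s_1,\dots,s_l)$ a tuple of positive integers with $\mathbf{s}=\overline{\mathbf{s}}$ and $|\mathbf{s}|=s_1+\dots+s_l$ odd. Then $H(\mathbf{s};p-1)\equiv S(\mathbf{s};p-1)\equiv0\pmod p$.
   Context: $\overline{\mathbf{s}}=(s_l,\dots,s_1)$. $H(\mathbf{s};N)=\sum_{1\le k_1<\dots<k_l\le N}k_1^{-s_1}\cdots k_l^{-s_l}$, $S(\mathbf{s};N)=\sum_{1\le k_1\le\dots\le k_l\le N}k_1^{-s_1}\cdots k_l^{-s_l}$. Congruences of rationals with denominators prime to $p$ are in the usual $p$-integral sense. *)

(* Defs.v *)
From mathcomp Require Import all_boot all_order all_algebra.
Set Implicit Arguments. Unset Strict Implicit. Unset Printing Implicit Defensive.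
Import Order.TTheory GRing.Theory Num.Theory.
Local Open Scope ring_scope.

Fixpoint Hfrom (s : seq nat) (m N : nat) : rat :=
  match s with
  | [::] => 1
  | a :: s' => \sum_(m.+1 <= k < N.+1) (k%:R ^- a) * Hfrom s' k N
  end.

Fixpoint Sfrom (s : seq nat) (m N : nat) : rat :=
  match s with
  | [::] => 1
  | a :: s' => \sum_(m <= k < N.+1) (k%:R ^- a) * Sfrom s' k N
  end.

Definition H (s : seq nat) (N : nat) : rat := Hfrom s 0 N.
Definition S (s : seq nat) (N : nat) : rat := Sfrom s 1 N.

(* r = 0 (mod p) in the p-integral sense: the reduced fraction r has numerator
   divisible by p (hence denominator prime to p). *)
Definition p_cong0 (p : nat) (r : rat) : Prop := (p%:Z %| numq r)%Z.

(* Main.v *)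
Require Import Defs.
From mathcomp Require Import all_boot all_order all_algebra.
From mathcomp Require Import zify ring.
Set Implicit Arguments. Unset Strict Implicit. Unset Printing Implicit Defensive.
Import Order.TTheory GRing.Theory Num.Theory.
Local Open Scope ring_scope.

Definition wF {F : fieldType} (a k : nat) : F := (k%:R) ^- a.

Fixpoint GF {F : fieldType} (s : seq nat) (m n : nat) : F :=
  match s with
  | [::] => 1
  | a :: s' => \sum_(m.+1 <= k < n) wF a k * GF s' k n
  end.

Fixpoint TF {F : fieldType} (s : seq nat) (m n : nat) : F :=
  match s with
  | [::] => 1
  | a :: s' => \sum_(m <= k < n) wF a k * TF s' k n
  end.

Lemma reflect_sum {F : fieldType} (p a b : nat) (f : nat -> F) :
  (a <= b)%N -> (b <= p)%N ->
  \sum_(a <= k < b) f k = \sum_((p - b).+1 <= j < (p - a).+1) f (p - j)%N.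
Proof.
move=> ab bp; have [d bd] : exists d, b = (a + d)%N.
  by exists (b - a)%N; rewrite subnKC.
subst b.
clear ab; elim: d bp => [|d IH] bp.
  by rewrite addn0 !big_geq.
rewrite addnS big_nat_recr /=; try lia.
rewrite IH; try lia.
rewrite (@big_ltn _ _ _ (p - (a + d).+1).+1); try lia.
have -> : ((p - (a + d).+1).+1 = p - (a + d))%N by lia.
have -> : (p - (p - (a + d)) = a + d)%N by lia.
by rewrite addrC.
Qed.

Lemma exchG {F : fieldType} (m n : nat) (f : nat -> nat -> F) :
  \sum_(m <= j < n) \sum_(j.+1 <= k < n) f j k =
  \sum_(m <= k < n) \sum_(m <= j < k) f j k.
Proof.
elim: n => [|n IH]; first by rewrite !big_geq.
case: (leqP m n) => mn; last by rewrite !big_geq.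
rewrite [LHS]big_nat_recr //= [RHS]big_nat_recr //= -IH.
rewrite [X in _ + X = _]big_geq // addr0.
rewrite -big_split /=; apply: eq_big_nat => j /andP [_ jn].
by rewrite big_nat_recr.
Qed.

Lemma exchT {F : fieldType} (m n : nat) (f : nat -> nat -> F) :
  \sum_(m <= j < n) \sum_(j <= k < n) f j k =
  \sum_(m <= k < n) \sum_(m <= j < k.+1) f j k.
Proof.
elim: n => [|n IH]; first by rewrite !big_geq.
case: (leqP m n) => mn; last by rewrite !big_geq.
rewrite [LHS]big_nat_recr //= [RHS]big_nat_recr //= -IH big_nat1.
rewrite [in RHS]big_nat_recr //= addrA; congr (_ + _).
rewrite -big_split /=; apply: eq_big_nat => j /andP [_ jn].
by rewrite big_nat_recr //; lia.
Qed.

Lemma GF_rcons {F : fieldType} s a m n :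
  GF (rcons s a) m n = \sum_(m.+1 <= k < n) GF s m k * (wF a k : F).
Proof.
elim: s m => [|b s IH] m /=.
  by apply: eq_bigr => k _; rewrite mul1r mulr1.
under eq_bigr => j _ do rewrite IH big_distrr.
rewrite exchG; apply: eq_bigr => k _; rewrite big_distrl /=.
by apply: eq_bigr => j _; rewrite mulrA.
Qed.

Lemma TF_rcons {F : fieldType} s a m n :
  TF (rcons s a) m n = \sum_(m <= k < n) TF s m k.+1 * (wF a k : F).
Proof.
elim: s m => [|b s IH] m /=.
  by apply: eq_bigr => k _; rewrite mul1r mulr1.
under eq_bigr => j _ do rewrite IH big_distrr.
rewrite exchT; apply: eq_bigr => k _; rewrite big_distrl /=.
by apply: eq_bigr => j _; rewrite mulrA.
Qed.

Lemma wF_refl {F : fieldType} (p a j : nat) : (p%:R : F) = 0 -> (j <= p)%N ->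
  wF a (p - j) = (-1) ^+ a * (wF a j : F).
Proof.
move=> hp jp; rewrite /wF natrB // hp sub0r.
have -> : ((- (j%:R)) ^+ a : F) = (-1) ^+ a * (j%:R) ^+ a by rewrite -exprMn mulN1r.
by rewrite invfM invr_sign.
Qed.

Lemma GF_refl {F : fieldType} (p : nat) s m n : (p%:R : F) = 0 ->
  (m < n)%N -> (n <= p)%N ->
  GF s m n = (-1) ^+ (sumn s) * (GF (rev s) (p - n) (p - m) : F).
Proof.
move=> hp; elim: s m => [|a s IH] m mn np /=; first by rewrite mulr1.
rewrite (@reflect_sum F p _ _ (fun k => wF a k * GF s k n)) //.
have -> : ((p - m.+1).+1 = p - m)%N by lia.
rewrite rev_cons GF_rcons big_distrr /=; apply: eq_big_nat => j /andP [j1 j2].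
rewrite IH; [|lia|lia].
have -> : (p - (p - j) = j)%N by lia.
rewrite wF_refl //; try lia.
rewrite exprD; ring.
Qed.

Lemma TF_refl {F : fieldType} (p : nat) s m n : (p%:R : F) = 0 ->
  (m < n)%N -> (n <= p)%N ->
  TF s m n = (-1) ^+ (sumn s) * (TF (rev s) (p - n).+1 (p - m).+1 : F).
Proof.
move=> hp; elim: s m => [|a s IH] m mn np /=; first by rewrite mulr1.
rewrite (@reflect_sum F p _ _ (fun k => wF a k * TF s k n)) //; try lia.
rewrite rev_cons TF_rcons big_distrr /=; apply: eq_big_nat => j /andP [j1 j2].
rewrite IH; [|lia|lia].
have -> : (p - (p - j) = j)%N by lia.
rewrite wF_refl //; try lia.
rewrite exprD; ring.
Qed.

Definition good {F : fieldType} (r : rat) (v : F) :=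
  exists x y : int, (x%:~R : F) != 0 /\ r * x%:~R = y%:~R /\ v = y%:~R / x%:~R.

Lemma good1 {F : fieldType} : good 1 (1 : F).
Proof. by exists 1, 1; rewrite !mulr1z !mulr1 divr1 oner_neq0. Qed.

Lemma good0 {F : fieldType} : good 0 (0 : F).
Proof. by exists 1, 0; rewrite !mulr1z !mulr0z !mul0r oner_neq0. Qed.

Lemma good_add {F : fieldType} r1 r2 (v1 v2 : F) :
  good r1 v1 -> good r2 v2 -> good (r1 + r2) (v1 + v2).
Proof.
move=> [x1 [y1 [h1 [e1 ->]]]] [x2 [y2 [h2 [e2 ->]]]].
exists (x1 * x2), (y1 * x2 + y2 * x1); rewrite !rmorphM !rmorphD !rmorphM /=.
split; first by rewrite mulf_neq0.
split.
  by rewrite mulrDl -e1 -e2; ring.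
by field; rewrite h1 h2.
Qed.

Lemma good_mul {F : fieldType} r1 r2 (v1 v2 : F) :
  good r1 v1 -> good r2 v2 -> good (r1 * r2) (v1 * v2).
Proof.
move=> [x1 [y1 [h1 [e1 ->]]]] [x2 [y2 [h2 [e2 ->]]]].
exists (x1 * x2), (y1 * y2); rewrite !rmorphM /=.
split; first by rewrite mulf_neq0.
split.
  by rewrite -e1 -e2; ring.
by field; rewrite h1 h2.
Qed.

Lemma good_sum {F : fieldType} m n (f : nat -> rat) (g : nat -> F) :
  (forall i, (m <= i < n)%N -> good (f i) (g i)) ->
  good (\sum_(m <= i < n) f i) (\sum_(m <= i < n) g i).
Proof.
move=> h; rewrite big_nat_cond [X in good _ X]big_nat_cond.
apply: (big_ind2 (fun a b => good a b)).
- exact: good0.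
- by move=> ? ? ? ? ; apply: good_add.
- by move=> i /andP [hi _]; apply: h.
Qed.

Lemma good_w {F : fieldType} (p a k : nat) : p \in [pchar F] ->
  (0 < k < p)%N -> good ((k%:R : rat) ^- a) (wF a k : F).
Proof.
move=> hc hk.
have kF : (k%:R : F) != 0.
  rewrite -(dvdn_pcharf hc); apply/negP => /dvdn_leq; lia.
have kQ : (k%:R : rat) != 0 by rewrite pnatr_eq0; lia.
exists (k ^ a)%N%:Z, 1; rewrite -!pmulrn !natrX.
split; first by rewrite expf_neq0.
split; first by rewrite mulVf // expf_neq0.
by rewrite /wF div1r.
Qed.

Lemma good_H {F : fieldType} (p N : nat) : p \in [pchar F] -> (N < p)%N ->
  forall s m, good (Hfrom s m N) (GF s m N.+1 : F).
Proof.
move=> hc hN; elim => [|a s IH] m /=; first exact: good1.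
apply: good_sum => i hi; apply: good_mul; last exact: IH.
apply: (good_w _ hc); lia.
Qed.

Lemma good_S {F : fieldType} (p N : nat) : p \in [pchar F] -> (N < p)%N ->
  forall s m, (0 < m)%N -> good (Sfrom s m N) (TF s m N.+1 : F).
Proof.
move=> hc hN; elim => [|a s IH] m hm /=; first exact: good1.
apply: good_sum => i hi; apply: good_mul; last by apply: IH; lia.
apply: (good_w _ hc); lia.
Qed.

Lemma int_char0 {F : fieldType} (p : nat) (z : int) : p \in [pchar F] ->
  (z%:~R : F) = 0 -> (p%:Z %| z)%Z.
Proof.
move=> hc; case: z => n /=.
  by rewrite -pmulrn => /eqP; rewrite -(dvdn_pcharf hc) dvdzE.
rewrite NegzE mulrNz -pmulrn => /eqP; rewrite oppr_eq0 -(dvdn_pcharf hc).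
by rewrite dvdzE.
Qed.

Lemma good_cong0 {F : fieldType} (p : nat) (r : rat) : p \in [pchar F] ->
  good r (0 : F) -> p_cong0 p r.
Proof.
move=> hc [x [y [hx [e h0]]]].
have y0 : (y%:~R : F) = 0.
  by move: h0 => /esym /eqP; rewrite mulf_eq0 invr_eq0 (negbTE hx) orbF => /eqP.
have ei : (numq r * x = y * denq r)%R.
  have hd : ((denq r)%:~R : rat) != 0 by rewrite intr_eq0 denq_neq0.
  have hr := esym (divq_num_den r).
  apply/eqP; rewrite -(eqr_int rat) !rmorphM /= -e.
  rewrite [X in _ == X * _ * _]hr; apply/eqP; field.
  exact: hd.
have : ((numq r * x)%:~R : F) = 0 by rewrite ei rmorphM /= y0 mul0r.
rewrite rmorphM /= => /eqP; rewrite mulf_eq0 (negbTE hx) orbF => /eqP.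
by apply: int_char0.
Qed.

Lemma two_nz (p : nat) : prime p -> odd p -> (2%:R : 'F_p) != 0.
Proof.
move=> pr op; rewrite -(dvdn_pcharf (pchar_Fp pr)); apply/negP => /dvdn_leq h.
have := prime_gt1 pr; have := h isT; case: p pr op {h} => [|[|[|p]]] //.
Qed.

Lemma zero_of_neg (p : nat) (G : 'F_p) : prime p -> odd p -> G = - G -> G = 0.
Proof.
move=> pr op e; have : (2%:R : 'F_p) * G = 0.
  by rewrite mulr_natl mulr2n {1}e addNr.
by move/eqP; rewrite mulf_eq0 (negbTE (two_nz pr op)) /= => /eqP.
Qed.

Local Close Scope ring_scope.

Theorem corollary3p4 (p : nat) (s : seq nat) :
  prime p -> odd p ->
  all (fun a => 0 < a)%N s ->
  rev s = s ->
  odd (sumn s) ->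
  p_cong0 p (H s p.-1) /\ p_cong0 p (S s p.-1).
Proof.
move=> pr op _ rs os.
have hc := pchar_Fp pr.
have hp : ((p%:R : 'F_p) = 0)%R by apply/eqP; rewrite -(dvdn_pcharf hc).
have p1 := prime_gt1 pr.
have pN : p.-1.+1 = p by rewrite prednK //; lia.
have hN : p.-1 < p by lia.
have sg : (((-1) ^+ sumn s : 'F_p) = -1)%R by rewrite -signr_odd os expr1.
split.
  apply: (good_cong0 hc); rewrite /H.
  have := good_H hc hN s 0; rewrite prednK; last lia.
  suff -> : (GF s 0 p : 'F_p) = 0%R by [].
  apply: zero_of_neg pr op _.
  rewrite {1}(@GF_refl _ p s 0 p hp) //; last lia.
  by rewrite rs subnn subn0 sg mulN1r.
apply: (good_cong0 hc); rewrite /S.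
have := good_S hc hN s (isT : 0 < 1); rewrite prednK; last lia.
suff -> : (TF s 1 p : 'F_p) = 0%R by [].
apply: zero_of_neg pr op _.
rewrite {1}(@TF_refl _ p s 1 p hp) //.
by rewrite rs subnn subn1 prednK ?sg ?mulN1r //; lia.
Qed.
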